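(* Let $s,t,q,N$ be integers with $0\le s<q$, $1\le t<q$, $N\ge0$, $t\nmid q$ and $\gcd(t,q)=g>1$. Put $\tilde t=t/g$, $\tilde q=q/g$, and write $s=\overline sg+s_g$ ($0\le s_g<g$), $\overline s=\overline{\overline s}\tilde t+\hat{\hat s}$ ($0\le\hat{\hat s}<\tilde t$), $\tilde q=\overline{\overline q}\tilde t+\hat{\hat q}$ ($1\le\hat{\hat q}<\tilde t$). Let $S^-(s,t,q,N)=\sum_{k=0}^N\lfloor(s-kt)/q\rfloor$, $M=-\lfloor(s-Nt)/q\rfloor$, $x_M=(s+(M-1)q)/t$, $S=-\lfloor q/t\rfloor\frac{(M-1)M}2-M(N-\lfloor x_M\rfloor)$, $H=\{k\in\mathbb N:(\hat{\hat s}+k\hat{\hat q})\bmod\tilde t<\hat{\hat q}\}$, $J=H\cap\{0,\dots,\tilde t-1\}=\{j_0<\dots<j_{\hat{\hat q}-1}\}$, $S_K=\sum_{k\in K}k$. Then: (a) if $j_0\ge M$, $S^-(s,t,q,N)=S$; (b.1) if $j_0<M\le j_{\hat{\hat q}-1}$, $S^-(s,t,q,N)=S-S_K$ with $K=H\cap\{0,\dots,M-1\}$; (b.2) if $j_{\hat{\hat q}-1}<M$ and $j_0+\tilde t\ge M$, $S^-(s,t,q,N)=S-S_J$; (b.3) if $j_{\hat{\hat q}-1}<M$ and $j_0+\tilde t<M$, with $u=\lfloor(M-1)/\tilde t\rfloor$ and $K=H\cap\{u\tilde t,\dots,M-1\}$, $S^-(s,t,q,N)=S-uS_J-\hat{\hat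 q}\,\tilde t\frac{(u-1)u}2-S_K$.
   Context: Here $r\bmod\tilde t$ denotes the representative of $r$ in $\{0,\dots,\tilde t-1\}$. *)

(* Defs.v *)
From HB Require Import structures.
From mathcomp Require Import all_boot all_order all_algebra.
Set Implicit Arguments. Unset Strict Implicit. Unset Printing Implicit Defensive.
Import Order.TTheory GRing.Theory Num.Theory.

Local Open Scope ring_scope.

(* Floors of rationals a/b with b > 0 are rendered as Euclidean int division
   (a %/ b)%Z, which is floor division for positive divisors. *)

Definition Sminus (s t q N : nat) : int :=
  \sum_(0 <= k < N.+1) ((s%:Z - (k * t)%:Z) %/ q%:Z)%Z.

Definition gg (t q : nat) : nat := gcdn t q.
Definition tt (t q : nat) : nat := (t %/ gg t q)%N.
Definition qt (t q : nat) : nat := (q %/ gg t q)%N.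
Definition sbar (s t q : nat) : nat := (s %/ gg t q)%N.
Definition hhs (s t q : nat) : nat := (sbar s t q %% tt t q)%N.
Definition hhq (t q : nat) : nat := (qt t q %% tt t q)%N.

Definition Mv (s t q N : nat) : int := - ((s%:Z - (N * t)%:Z) %/ q%:Z)%Z.
Definition floor_xM (s t q N : nat) : int :=
  ((s%:Z + (Mv s t q N - 1) * q%:Z) %/ t%:Z)%Z.
(* S = - floor(q/t) (M-1)M/2 - M (N - floor x_M) ; (M-1)M is even *)
Definition Sv (s t q N : nat) : int :=
  let M := Mv s t q N in
  - ((q %/ t)%N)%:Z * (((M - 1) * M) %/ 2)%Z - M * (N%:Z - floor_xM s t q N).

Definition inH (s t q : nat) (k : nat) : bool :=
  ((hhs s t q + k * hhq t q) %% tt t q < hhq t q)%N.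
Definition Jseq (s t q : nat) : seq nat :=
  [seq j <- iota 0 (tt t q) | inH s t q j].
Definition j0 (s t q : nat) : nat := head 0%N (Jseq s t q).
Definition jlast (s t q : nat) : nat := last 0%N (Jseq s t q).
Definition SJ (s t q : nat) : nat := \sum_(j <- Jseq s t q) j.
Definition SH (s t q a b : nat) : nat := \sum_(a <= k < b | inH s t q k) k.

(* Main.v *)
Require Import Defs.
From HB Require Import structures.
From mathcomp Require Import all_boot all_order all_algebra.
From mathcomp Require Import zify ring lra.
Import Order.TTheory GRing.Theory Num.Theory.

Lemma lemA x r y g : (0 < g -> r < g -> (x*g + r) %/ (y*g) = x %/ y)%N.
Proof.
move=> g0 rg; rewrite [y*g]mulnC divnMA divnMDl // (divn_small rg) addn0 ?(divnMA x y g) //. 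
Qed.

Lemma carry a h n : (a < n -> h < n -> (n <= a + h) = ((a+h) %% n < h))%N.
Proof. move=> ha hh. case: (leqP n (a+h)) => H.
 have -> : (a + h) %% n = a + h - n.
  have -> : a + h = (a+h-n) + n by lia.
  by rewrite modnDr modn_small; lia.
 lia.
 rewrite modn_small //. lia. Qed.

Lemma Dnat s t q j : (0 < t -> 0 < q ->
  (s + j.+1*q) %/ t = (s + j*q) %/ t + q %/ t + inH s t q j.+1)%N.
Proof.
move=> t0 q0.
have g0 : (0 < gg t q)%N by rewrite /gg gcdn_gt0 t0.
have et : t = tt t q * gg t q by rewrite /tt divnK // /gg dvdn_gcdl.
have eqq : q = qt t q * gg t q by rewrite /qt divnK // /gg dvdn_gcdr.
have tt0 : (0 < tt t q)%N by rewrite /tt divn_gt0 // dvdn_leq // /gg dvdn_gcdl.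
have es : s = sbar s t q * gg t q + s %% gg t q by rewrite /sbar -divn_eq.
have sg : (s %% gg t q < gg t q)%N by rewrite ltn_mod.
rewrite /inH /hhs /hhq.
move: g0 et eqq tt0 es sg.
set T := tt t q; set G := gg t q; set Q := qt t q; set SB := sbar s t q; set R := s %% G.
move=> g0 et eqq tt0 es sg.
have E : forall i, ((s + i*q) %/ t = (SB + i * Q) %/ T)%N.
  move=> i; rewrite -(@lemA (SB + i*Q) R T G g0 sg) -et; congr (_ %/ _).
  rewrite mulnDl -mulnA -eqq es; lia.
have Eq : (q %/ t = Q %/ T)%N.
  by rewrite -(@lemA Q 0 T G g0 g0) addn0 -et -eqq.
rewrite !E Eq.
have -> : (SB + j.+1 * Q = (SB + j * Q) + Q)%N by rewrite mulSn; lia.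
rewrite divnD //; congr (_ + _ + nat_of_bool _).
have hq : (Q %% T < T)%N by rewrite ltn_mod.
have ha : ((SB + j*Q) %% T < T)%N by rewrite ltn_mod.
rewrite (carry _ _ _ ha hq).
congr (_ < _)%N.
rewrite modnDm modnDml -[in RHS]modnDmr modnMmr modnDmr; congr (_ %% _); rewrite mulSn; lia.
Qed.

Lemma count_lt_iota h n : (h <= n)%N -> count (fun x => x < h)%N (iota 0 n) = h.
Proof.
move=> hn; have -> : n = (h + (n - h))%N by lia.
rewrite iotaD count_cat add0n.
rewrite (@eq_in_count _ _ predT); last by move=> x; rewrite mem_iota => /andP[_ ->].
rewrite count_predT size_iota (@eq_in_count _ _ pred0).
  by rewrite count_pred0 addn0.
by move=> x; rewrite mem_iota /= => /andP[hx _]; rewrite ltnNge hx.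
Qed.

Lemma count_rot c h n : coprime n h -> (h <= n)%N ->
  count (fun k => (c + k*h) %% n < h)%N (iota 0 n) = h.
Proof.
move=> co hn.
case: (posnP n) => [n0|n0]; first by move: hn; rewrite n0; case: h {co}.
set f := fun k => ((c + k*h) %% n)%N.
have -> : (fun k => (c + k*h) %% n < h)%N = preim f (fun x => x < h)%N by [].
rewrite -count_map.
suff P : perm_eq (map f (iota 0 n)) (iota 0 n).
  by rewrite (permP P) count_lt_iota.
have U : uniq (map f (iota 0 n)).
  rewrite map_inj_in_uniq ?iota_uniq //.
  move=> a b; rewrite !mem_iota /= !add0n => an bn.
  rewrite /f => /eqP; rewrite eqn_modDl.
  wlog ab : a b an bn / (a <= b)%N.
    move=> W; case: (leqP a b) => H; first exact: W.
    rewrite eq_sym => E; apply/esym; apply: W => //; exact: ltnW.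
  rewrite eq_sym eqn_mod_dvd ?leq_mul2r ?ab ?orbT // -mulnBl Gauss_dvdl //.
  move=> D; case: (posnP (b - a)) => H; first lia.
  have := dvdn_leq H D; lia.
have S : {subset map f (iota 0 n) <= iota 0 n}.
  move=> x /mapP[k _ ->]; rewrite mem_iota /= add0n /f ltn_mod //.
have [_ E] := uniq_min_size U S (eq_leq (esym (size_map f (iota 0 n)))).
by apply: uniq_perm => //; rewrite iota_uniq.
Qed.

Lemma tt_pos t q : (0 < t)%N -> (0 < tt t q)%N.
Proof. by move=> t0; rewrite /tt divn_gt0 ?gcdn_gt0 ?t0 // dvdn_leq // dvdn_gcdl. Qed.

Lemma coprime_tt_qt t q : (0 < t)%N -> coprime (tt t q) (qt t q).
Proof.
move=> t0; have g0 : (0 < gg t q)%N by rewrite /gg gcdn_gt0 t0.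
rewrite /coprime; apply/eqP.
have : (gcdn (tt t q) (qt t q) * gg t q = 1 * gg t q)%N.
  by rewrite muln_gcdl /tt /qt !divnK ?mul1n // /gg ?dvdn_gcdl ?dvdn_gcdr.
by move/eqP; rewrite eqn_pmul2r // => /eqP.
Qed.

Lemma count_J s t q : (0 < t)%N -> count (inH s t q) (iota 0 (tt t q)) = hhq t q.
Proof.
move=> t0; rewrite /inH count_rot //.
  by rewrite /hhq coprime_modr coprime_tt_qt.
by rewrite /hhq ltnW // ltn_mod tt_pos.
Qed.

Lemma inH_per s t q k i : inH s t q (k + i * tt t q) = inH s t q k.
Proof.
rewrite /inH mulnDl addnA -mulnA [tt t q * _]mulnC mulnA.
by rewrite addnC modnMDl.
Qed.

Lemma sum_const_seq (r : seq nat) (P : pred nat) c :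
  (\sum_(k <- r | P k) c = count P r * c)%N.
Proof.
elim: r => [|x r IH]; first by rewrite big_nil.
by rewrite big_cons IH /=; case: (P x) => //=; rewrite mulSn.
Qed.

Lemma SJ_sum s t q : SJ s t q = SH s t q 0 (tt t q).
Proof. by rewrite /SJ /SH /Jseq big_filter /index_iota subn0. Qed.

Lemma SH_block s t q i : (0 < t)%N ->
  SH s t q (i * tt t q) (i * tt t q + tt t q) = (SJ s t q + i * tt t q * hhq t q)%N.
Proof.
move=> t0; rewrite /SH -{1}[i * tt t q]add0n big_addn addKn.
rewrite (eq_bigl (inH s t q)); last by move=> k; rewrite inH_per.
rewrite big_split /= sum_const_seq /index_iota subn0 count_J // SJ_sum /SH /index_iota subn0.
by rewrite mulnC.
Qed.

Lemma SH_blocks s t q u : (0 < t)%N ->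
  SH s t q 0 (u * tt t q) = (u * SJ s t q + hhq t q * tt t q * 'C(u, 2))%N.
Proof.
move=> t0; elim: u => [|u IH].
  by rewrite mul0n bin0n muln0 /SH big_geq.
rewrite /SH (big_cat_nat _ (n := u * tt t q)) //=; last by rewrite leq_mul2r leqnSn orbT.
rewrite -/(SH _ _ _ _ _) IH -/(SH _ _ _ _ _).
rewrite [u.+1 * tt t q]mulSn [tt t q + _]addnC SH_block // binS bin1.
rewrite mulSn !mulnDr; lia.
Qed.

Local Open Scope ring_scope.

Lemma halfZ (u : nat) : (((u%:Z - 1) * u%:Z) %/ 2)%Z = ('C(u,2))%:Z.
Proof.
elim: u => [|u IH]; first by rewrite mulr0 div0z bin0n.
have -> : ((u.+1)%:Z - 1) * (u.+1)%:Z = u%:Z * 2 + (u%:Z - 1) * u%:Z.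
  rewrite -addn1 PoszD; ring.
by rewrite divzMDl // IH binS bin1 PoszD addrC.
Qed.

Definition fx s t q (m : nat) : int := ((s%:Z + (m%:Z - 1) * q%:Z) %/ t%:Z)%Z.
Definition Gf s t q (m : nat) : int :=
  - ((q %/ t)%N)%:Z * ('C(m, 2))%:Z + m%:Z * fx s t q m - (SH s t q 0 m)%:Z.

Lemma fx_cast s q j : s%:Z + ((j.+1)%:Z - 1) * q%:Z = ((s + j*q)%N)%:Z.
Proof. rewrite PoszD PoszM -addn1 PoszD; ring. Qed.

Lemma fx_step s t q j : (0 < t)%N -> (0 < q)%N ->
  fx s t q j.+2 = fx s t q j.+1 + ((q %/ t)%N)%:Z + (nat_of_bool (inH s t q j.+1))%:Z.
Proof.
move=> t0 q0; rewrite /fx !fx_cast !divz_nat Dnat // !PoszD.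
Qed.

Lemma SH_step s t q m : SH s t q 0 m.+1 = (SH s t q 0 m + inH s t q m * m)%N.
Proof.
rewrite /SH big_mkcond big_nat_recr //= -big_mkcond.
by case: (inH s t q m); rewrite ?mul1n ?mul0n ?addn0.
Qed.

Lemma Gf_step s t q m : (0 < t)%N -> (0 < q)%N ->
  Gf s t q m.+1 = Gf s t q m + fx s t q m.+1.
Proof.
move=> t0 q0; rewrite /Gf SH_step binS bin1.
case: m => [|j].
  rewrite /SH big_geq // bin0n; ring.
rewrite fx_step // !PoszD !PoszM.
ring.
Qed.

Lemma Mv_bounds s t q N : (s < q)%N -> (0 < t)%N ->
  0 <= Mv s t q N /\ s%:Z + (Mv s t q N - 1) * q%:Z < (N * t)%:Z /\
  (N * t)%:Z <= s%:Z + Mv s t q N * q%:Z.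
Proof.
move=> sq t0; have q0 : (0 < q)%N by apply: leq_ltn_trans sq.
rewrite /Mv; set z := ((s%:Z - (N * t)%:Z) %/ q%:Z)%Z.
have h1 : z * q%:Z <= s%:Z - (N*t)%:Z by apply: lez_floor; rewrite eqz_nat -lt0n.
have h2 : s%:Z - (N*t)%:Z < (z + 1) * q%:Z by apply: ltz_ceil; rewrite ltz_nat.
have hs : (s%:Z < q%:Z) by rewrite ltz_nat.
have hq : (0 < q%:Z) by rewrite ltz_nat.
have hN : 0 <= (N*t)%:Z by [].
split; first nia.
split; nia.
Qed.

Lemma divz_eqN (X : int) (t N : nat) : (0 < t)%N ->
  (N * t)%:Z <= X -> X < (N * t)%:Z + t%:Z -> (X %/ t%:Z)%Z = N%:Z.
Proof.
move=> t0 h1 h2.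
have -> : X = N%:Z * t%:Z + (X - (N*t)%:Z) by rewrite PoszM; ring.
rewrite divzMDl ?eqz_nat -?lt0n // divz_small ?addr0 //.
apply/andP; split; first lia.
rewrite gez0_abs //; lia.
Qed.

Lemma Sminus_G s t q N : (s < q)%N -> (0 < t)%N -> (t < q)%N ->
  Sminus s t q N = Gf s t q `|Mv s t q N|%N - (`|Mv s t q N|%N)%:Z * N%:Z.
Proof.
move=> sq t0 tq; have q0 : (0 < q)%N by apply: leq_ltn_trans sq.
elim: N => [|N IH].
  have M0 : Mv s t q 0 = 0.
    by rewrite /Mv mul0n subr0 divz_small ?oppr0 //.
  rewrite M0 /Sminus big_nat1 mul0n subr0 divz_small //.
  by rewrite /Gf /SH big_geq // bin0n mulr0 !mul0r subr0 oppr0 add0r.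
have [b0 [b1 b2]] := Mv_bounds s t q N sq t0.
have [c0 [c1 c2]] := Mv_bounds s t q N.+1 sq t0.
have Sm : Sminus s t q N.+1 = Sminus s t q N - Mv s t q N.+1.
  by rewrite /Sminus big_nat_recr //= /Mv opprK.
move: b0 b1 b2 c0 c1 c2 Sm IH.
have E1 := gez0_abs (Mv_bounds s t q N sq t0).1.
have E2 := gez0_abs (Mv_bounds s t q N.+1 sq t0).1.
move: E1 E2; set m := `|Mv s t q N|%N; set m' := `|Mv s t q N.+1|%N.
move=> E1 E2; rewrite -E1 -E2 => b0 b1 b2 c0 c1 c2 -> ->.
have hq : (t%:Z < q%:Z) by rewrite ltz_nat.
have ht : (0 < t%:Z) by rewrite ltz_nat.
rewrite !PoszM in b1 b2 c1 c2.
have L1 : m%:Z <= m'%:Z by nia.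
have L2 : m'%:Z <= m%:Z + 1 by nia.
have [E|E] : m' = m \/ m' = m.+1 by lia.
  rewrite E -addn1 PoszD; ring.
rewrite E in c1 c2 *.
rewrite Gf_step //.
have -> : fx s t q m.+1 = N%:Z.
  move: c1; rewrite -[m.+1]addn1 PoszD addrK => c1.
  rewrite /fx; apply: divz_eqN => //; rewrite PoszD addrK !PoszM; nia.
rewrite -[m.+1]addn1 -[N.+1]addn1 !PoszD; ring.
Qed.

Lemma key s t q N : (s < q)%N -> (0 < t)%N -> (t < q)%N ->
  Sminus s t q N = Sv s t q N - (SH s t q 0 `|Mv s t q N|%N)%:Z.
Proof.
move=> sq t0 tq; rewrite Sminus_G // /Sv /Gf /floor_xM /fx.
have E := gez0_abs (Mv_bounds s t q N sq t0).1.
move: E; set m := `|Mv s t q N|%N => E; rewrite -E halfZ.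
ring.
Qed.

Lemma memJ s t q j : (j \in Jseq s t q) = (j < tt t q)%N && inH s t q j.
Proof. by rewrite /Jseq mem_filter mem_iota add0n andbC. Qed.

Lemma J_sorted s t q : sorted leq (Jseq s t q).
Proof. by rewrite /Jseq; apply: sorted_filter; [exact: leq_trans | exact: iota_sorted]. Qed.

Lemma J_bounds s t q j : j \in Jseq s t q -> (j0 s t q <= j <= jlast s t q)%N.
Proof.
move=> jJ; set r := Jseq s t q.
have ij : (index j r < size r)%N by rewrite index_mem.
have sz : (0 < size r)%N by apply: leq_ltn_trans ij.
have H := sorted_leq_nth leq_trans leqnn 0%N (J_sorted s t q).
rewrite /j0 /jlast -/r -nth0 -(nth_last 0%N r).
rewrite -[X in (_ <= X <= _)%N](nth_index 0%N jJ).
apply/andP; split; apply: H; rewrite ?inE //=.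
all: rewrite /r in ij sz *; lia.
Qed.

Lemma below_j0 s t q k : (k < j0 s t q)%N -> inH s t q k -> False.
Proof.
move=> kj hk.
have ne : Jseq s t q != [::].
  by apply: contraTneq kj => E; rewrite /j0 E.
have j0J : j0 s t q \in Jseq s t q.
  by rewrite /j0; case: (Jseq s t q) ne => // x r _; rewrite mem_head.
have kJ : k \in Jseq s t q.
  rewrite memJ hk andbT; move: j0J; rewrite memJ => /andP[h _]; exact: ltn_trans h.
by have := J_bounds s t q k kJ; rewrite leqNgt kj.
Qed.

Lemma above_jlast s t q k : (jlast s t q < k)%N -> (k < tt t q)%N -> inH s t q k -> False.
Proof.
move=> jk kT hk; have kJ : k \in Jseq s t q by rewrite memJ kT hk.
by have := J_bounds s t q k kJ; rewrite andbC leqNgt jk.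
Qed.

Lemma SH_eq0 s t q a b :
  (forall k, (a <= k < b)%N -> inH s t q k -> False) -> SH s t q a b = 0%N.
Proof.
move=> H; rewrite /SH big_nat_cond big1 // => k /andP[kr hk].
by case: (H k kr hk).
Qed.

Lemma SH_split s t q a b c : (a <= b)%N -> (b <= c)%N ->
  SH s t q a c = (SH s t q a b + SH s t q b c)%N.
Proof. by move=> ab bc; rewrite /SH (big_cat_nat ab bc). Qed.

Theorem theorem13 (s t q N : nat)
  (hsq : (s < q)%N) (ht0 : (0 < t)%N) (htq : (t < q)%N)
  (hndvd : ~~ (t %| q)%N) (hg : (1 < gcdn t q)%N) :
  let M := Mv s t q N in
  let S := Sv s t q N in
  let Mn := `|M|%N in
  let ttl := tt t q in
  [/\ (M <= (j0 s t q)%:Z -> Sminus s t q N = S),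
      ((j0 s t q)%:Z < M -> M <= (jlast s t q)%:Z ->
         Sminus s t q N = S - (SH s t q 0 Mn)%:Z),
      ((jlast s t q)%:Z < M -> M <= (j0 s t q + ttl)%:Z ->
         Sminus s t q N = S - (SJ s t q)%:Z)
    & ((jlast s t q)%:Z < M -> (j0 s t q + ttl)%:Z < M ->
         let u := ((M - 1) %/ ttl%:Z)%Z in
         Sminus s t q N =
           S - u * (SJ s t q)%:Z
             - (hhq t q)%:Z * ttl%:Z * (((u - 1) * u) %/ 2)%Z
             - (SH s t q (`|u|%N * ttl) Mn)%:Z)].
Proof.
move=> M S Mn ttl.
have K := key s t q N hsq ht0 htq.
have EM : M = Mn%:Z by rewrite /Mn gez0_abs // (Mv_bounds s t q N hsq ht0).1.
rewrite -/M -/S -/Mn in K.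
rewrite EM; split.
- rewrite lez_nat => h; rewrite K SH_eq0 ?subr0 // => k /andP[_ kM] hk.
  by apply: (below_j0 s t q k) hk; apply: leq_trans h.
- by move=> _ _; rewrite K.
- rewrite ltz_nat lez_nat => h1 h2; rewrite K SJ_sum; congr (_ - Posz _).
  case: (leqP Mn ttl) => hm.
    rewrite [in RHS](SH_split _ _ _ _ _ _ (leq0n Mn) hm) [SH _ _ _ Mn _]SH_eq0 ?addn0 //.
    move=> k /andP[mk kT] hk; apply: (above_jlast s t q k) kT hk; exact: leq_trans mk.
  rewrite (SH_split _ _ _ _ _ _ (leq0n ttl) (ltnW hm)) [SH _ _ _ ttl _]SH_eq0 ?addn0 //.
  move=> k /andP[Tk km] hk; apply: (below_j0 s t q (k - ttl)).
    lia.
  by rewrite -(inH_per _ _ _ _ 1) mul1n subnK.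
rewrite !ltz_nat => h1 h2 u.
have mpos : (0 < Mn)%N by lia.
set un := ((Mn - 1) %/ ttl)%N.
have Eu : u = un%:Z.
  by rewrite /u /un -[in LHS](subnK mpos) PoszD addrK divz_nat.
rewrite Eu halfZ /= K.
have le : (un * ttl <= Mn)%N.
  apply: leq_trans (leq_trunc_div _ _) _; exact: leq_subr.
rewrite (SH_split _ _ _ _ _ _ (leq0n _) le) SH_blocks // !PoszD !PoszM.
ring.
Qed.
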